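(* Let $\mathscr C$ be an extensive category, $(T,\mu,\eta)$ a consistent monad on $\mathscr C$, $F\colon\mathscr C\to\mathscr C$ a functor with extension $\bar F$ to $\mathcal{K}\ell(T)$, and $I$ an object; suppose $T$ and $F$ preserve finite intersections. Let $h\colon(D,d,i_D)\to G(C,c,i_C)$ be a morphism in $\mathrm{Coalg}_I(TF+T)$ that is a monomorphism in $\mathscr C$. Then there exists a morphism $g\colon(E,e,i_E)\to(C,c,i_C)$ in $\mathrm{Coalg}_I^{\mathsf p}(\bar F)$ such that $(D,d,i_D)=G(E,e,i_E)$ and $h=Gg$.
   Context: A category is extensive if it has finite coproducts and for all objects $A,B$ the canonical functor $\mathscr C/A\times\mathscr C/B\to\mathscr C/(A+B)$ is an equivalence. $\mathcal{K}\ell(T)$ is the Kleisli category (morphisms $X\to Y$ are $\mathscr C$-morphisms $X\to TY$, composition $g\circ f=\mu_Z\cdot Tg\cdot f$). $T$ consistent: every $\eta_X$ monic. Pure Kleisli morphisms are those of form $\eta_Y\cdot f$, identified with $\mathscr C$-morphisms $f$. $\bar F$ extends $F$: $\bar F(\eta\cdot f)=\eta\cdot Ff$ on pure morphisms and $\bar F X=FX$. Preserving finite intersections: preserving pullbacks of pairs of monomorphisms (and monomorphisms). $\mathrm{Coalg}_I^{\mathsf p}(\bar F)$: objects are $(C,c,i_C)$ with $c\colon C\to TFC$, $i_C\colon I\to TC$; morphisms are pure Kleisli morphisms $h$ with $\bar Fh\circ c=d\circ h$ and $h\circ i_C=i_D$. $\mathrm{Coalg}_I(TF+T)$: $I$-pointed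 coalgebras in $\mathscr C$ for $TF+T$. $G(C,c,i_C)$ is the coalgebra on $C+I$ with structure $(TF\mathsf{inl}+T\mathsf{inl})\cdot(c+i_C)$ and pointing $\mathsf{inr}\colon I\to C+I$; $G$ maps a pure homomorphism $h$ to $h+\mathrm{id}_I$. The equality $(D,d,i_D)=G(E,e,i_E)$ is up to isomorphism. *)

(* Defs.v *)
Set Implicit Arguments.
Unset Strict Implicit.

Record Category := {
  Ob :> Type;
  Hom : Ob -> Ob -> Type;
  idm : forall A, Hom A A;
  comp : forall A B C, Hom B C -> Hom A B -> Hom A C;
  comp_id_l : forall A B (f : Hom A B), comp (idm B) f = f;
  comp_id_r : forall A B (f : Hom A B), comp f (idm A) = f;
  comp_assoc : forall A B C D (f : Hom A B) (g : Hom B C) (h : Hom C D),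
      comp h (comp g f) = comp (comp h g) f
}.
Arguments Hom c _ _ : clear implicits.
Arguments idm {c} A.
Arguments comp {c A B C} _ _.

Section Basics.
Variable C : Category.

Definition mono {A B : C} (m : Hom C A B) : Prop :=
  forall Z (f g : Hom C Z A), comp m f = comp m g -> f = g.

Definition is_iso {A B : C} (f : Hom C A B) : Prop :=
  exists g : Hom C B A, comp g f = idm A /\ comp f g = idm B.

Definition is_pullback {A B X P : C} (m1 : Hom C A X) (m2 : Hom C B X)
  (p1 : Hom C P A) (p2 : Hom C P B) : Prop :=
  comp m1 p1 = comp m2 p2 /\
  forall Z (z1 : Hom C Z A) (z2 : Hom C Z B), comp m1 z1 = comp m2 z2 ->
    exists u : Hom C Z P, (comp p1 u = z1 /\ comp p2 u = z2) /\
      forall u' : Hom C Z P, comp p1 u' = z1 -> comp p2 u' = z2 -> u' = u.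
End Basics.

Record Functor (C D : Category) := {
  fobj :> C -> D;
  fmap : forall A B, Hom C A B -> Hom D (fobj A) (fobj B);
  fmap_id : forall A, fmap (idm A) = idm (fobj A);
  fmap_comp : forall A B E (f : Hom C A B) (g : Hom C B E),
      fmap (comp g f) = comp (fmap g) (fmap f)
}.
Arguments fmap {C D} f0 {A B} _.

Definition preserves_finite_intersections {C : Category} (F : Functor C C) : Prop :=
  (forall A B (m : Hom C A B), mono m -> mono (fmap F m)) /\
  (forall A B X P (m1 : Hom C A X) (m2 : Hom C B X) (p1 : Hom C P A) (p2 : Hom C P B),
      mono m1 -> mono m2 -> is_pullback m1 m2 p1 p2 ->
      is_pullback (fmap F m1) (fmap F m2) (fmap F p1) (fmap F p2)).

Record Monad (C : Category) := {
  mfun :> Functor C C;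
  eta : forall X : C, Hom C X (mfun X);
  mu : forall X : C, Hom C (mfun (mfun X)) (mfun X);
  eta_nat : forall X Y (f : Hom C X Y), comp (fmap mfun f) (eta X) = comp (eta Y) f;
  mu_nat : forall X Y (f : Hom C X Y),
      comp (fmap mfun f) (mu X) = comp (mu Y) (fmap mfun (fmap mfun f));
  mu_eta_l : forall X, comp (mu X) (eta (mfun X)) = idm (mfun X);
  mu_eta_r : forall X, comp (mu X) (fmap mfun (eta X)) = idm (mfun X);
  mu_assoc : forall X, comp (mu X) (fmap mfun (mu X)) = comp (mu X) (mu (mfun X))
}.
Arguments eta {C} m X.
Arguments mu {C} m X.

Definition consistent {C : Category} (T : Monad C) : Prop :=
  forall X : C, mono (eta T X).

Definition kcomp {C : Category} (T : Monad C) {X Y Z : C}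
  (g : Hom C Y (T Z)) (f : Hom C X (T Y)) : Hom C X (T Z) :=
  comp (mu T Z) (comp (fmap T g) f).
Arguments kcomp {C} T {X Y Z} g f.

Definition pure {C : Category} (T : Monad C) {X Y : C} (f : Hom C X Y) : Hom C X (T Y) :=
  comp (eta T Y) f.
Arguments pure {C} T {X Y} f.

Record KleisliExtension {C : Category} (T : Monad C) (F : Functor C C) := {
  Fbar : forall X Y : C, Hom C X (T Y) -> Hom C (F X) (T (F Y));
  Fbar_id : forall X : C, Fbar (eta T X) = eta T (F X);
  Fbar_comp : forall X Y Z (f : Hom C X (T Y)) (g : Hom C Y (T Z)),
      Fbar (kcomp T g f) = kcomp T (Fbar g) (Fbar f);
  Fbar_pure : forall X Y (f : Hom C X Y), Fbar (pure T f) = pure T (fmap F f)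
}.
Arguments Fbar {C T F} _ {X Y} _.

Record Coproducts (C : Category) := {
  init : C;
  init_map : forall X : C, Hom C init X;
  init_uniq : forall X (f : Hom C init X), f = init_map X;
  coprod : C -> C -> C;
  inl : forall A B : C, Hom C A (coprod A B);
  inr : forall A B : C, Hom C B (coprod A B);
  copair : forall A B X, Hom C A X -> Hom C B X -> Hom C (coprod A B) X;
  copair_inl : forall A B X (f : Hom C A X) (g : Hom C B X), comp (copair f g) (inl A B) = f;
  copair_inr : forall A B X (f : Hom C A X) (g : Hom C B X), comp (copair f g) (inr A B) = g;
  copair_uniq : forall A B X (f : Hom C A X) (g : Hom C B X) (u : Hom C (coprod A B) X),
      comp u (inl A B) = f -> comp u (inr A B) = g -> u = copair f g
}.
Arguments init {C} _.
Arguments coprod {C} _ _ _.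
Arguments inl {C} _ A B.
Arguments inr {C} _ A B.
Arguments copair {C} _ {A B X} _ _.

Definition cpmap {C : Category} (cp : Coproducts C) {A B A' B' : C}
  (f : Hom C A A') (g : Hom C B B') : Hom C (coprod cp A B) (coprod cp A' B') :=
  copair cp (comp (inl cp A' B') f) (comp (inr cp A' B') g).

(** Extensivity: for all A, B the canonical functor
      C/A x C/B -> C/(A+B),  ((X,a),(Y,b)) |-> (X+Y, a+b),  (p,q) |-> p+q
    is an equivalence, i.e. essentially surjective, full and faithful. *)
Definition Extensive {C : Category} (cp : Coproducts C) : Prop :=
  (forall (A B Z : C) (f : Hom C Z (coprod cp A B)),
     exists (X Y : C) (a : Hom C X A) (b : Hom C Y B) (phi : Hom C (coprod cp X Y) Z),
       is_iso phi /\ comp f phi = cpmap cp a b) /\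
  (forall (A B X Y X' Y' : C) (a : Hom C X A) (b : Hom C Y B)
          (a' : Hom C X' A) (b' : Hom C Y' B) (u : Hom C (coprod cp X Y) (coprod cp X' Y')),
     comp (cpmap cp a' b') u = cpmap cp a b ->
     exists (p : Hom C X X') (q : Hom C Y Y'),
       comp a' p = a /\ comp b' q = b /\ u = cpmap cp p q) /\
  (forall (A B X Y X' Y' : C) (a : Hom C X A) (b : Hom C Y B)
          (a' : Hom C X' A) (b' : Hom C Y' B) (p p' : Hom C X X') (q q' : Hom C Y Y'),
     comp a' p = a -> comp a' p' = a -> comp b' q = b -> comp b' q' = b ->
     cpmap cp p q = cpmap cp p' q' -> p = p' /\ q = q').

Section Coalg.
Variables (C : Category) (cp : Coproducts C) (T : Monad C) (F : Functor C C)
          (Fb : KleisliExtension T F) (I : C).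

(** Morphism in Coalg_I^p(Fbar) between (C1,c1,i1) and (C2,c2,i2):
    a pure Kleisli morphism h (identified with h : C1 -> C2 in C). *)
Definition pure_coalg_hom {C1 C2 : C}
  (c1 : Hom C C1 (T (F C1))) (i1 : Hom C I (T C1))
  (c2 : Hom C C2 (T (F C2))) (i2 : Hom C I (T C2)) (h : Hom C C1 C2) : Prop :=
  kcomp T (Fbar Fb (pure T h)) c1 = kcomp T c2 (pure T h) /\
  kcomp T (pure T h) i1 = i2.

Definition TFT (X : C) : C := coprod cp (T (F X)) (T X).
Definition TFTmap {X Y : C} (f : Hom C X Y) : Hom C (TFT X) (TFT Y) :=
  cpmap cp (fmap T (fmap F f)) (fmap T f).

Definition coalg_hom {D1 D2 : C}
  (d1 : Hom C D1 (TFT D1)) (j1 : Hom C I D1)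
  (d2 : Hom C D2 (TFT D2)) (j2 : Hom C I D2) (h : Hom C D1 D2) : Prop :=
  comp (TFTmap h) d1 = comp d2 h /\ comp h j1 = j2.

Definition coalg_iso {D1 D2 : C}
  (d1 : Hom C D1 (TFT D1)) (j1 : Hom C I D1)
  (d2 : Hom C D2 (TFT D2)) (j2 : Hom C I D2) (h : Hom C D1 D2) : Prop :=
  coalg_hom d1 j1 d2 j2 h /\
  exists k : Hom C D2 D1, coalg_hom d2 j2 d1 j1 k /\
    comp k h = idm D1 /\ comp h k = idm D2.

Definition G_obj (E : C) : C := coprod cp E I.
Definition G_str {E : C} (e : Hom C E (T (F E))) (iE : Hom C I (T E)) :
  Hom C (G_obj E) (TFT (G_obj E)) :=
  comp (cpmap cp (fmap T (fmap F (inl cp E I))) (fmap T (inl cp E I))) (cpmap cp e iE).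
Definition G_pt (E : C) : Hom C I (G_obj E) := inr cp E I.
Definition G_map {E E' : C} (g : Hom C E E') : Hom C (G_obj E) (G_obj E') :=
  cpmap cp g (idm I).
End Coalg.
Arguments pure_coalg_hom {C} T {F} Fb I {C1 C2} c1 i1 c2 i2 h.
Arguments TFT {C} cp T F X.
Arguments TFTmap {C} cp T F {X Y} f.
Arguments coalg_hom {C} cp T F I {D1 D2} d1 j1 d2 j2 h.
Arguments coalg_iso {C} cp T F I {D1 D2} d1 j1 d2 j2 h.
Arguments G_obj {C} cp I E.
Arguments G_str {C} cp T F I {E} e iE.
Arguments G_pt {C} cp I E.
Arguments G_map {C} cp I {E E'} g.

(* Main.v *)
Require Import Defs.

Section L.
Variables (C : Category) (cp : Coproducts C).

Lemma hom_ext {A B W : C} (u v : Hom C (coprod cp A B) W) :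
  comp u (inl cp A B) = comp v (inl cp A B) ->
  comp u (inr cp A B) = comp v (inr cp A B) -> u = v.
Proof.
  intros H1 H2. rewrite (copair_uniq (u:=v) eq_refl eq_refl).
  apply copair_uniq; assumption.
Qed.

Lemma init_ext {W : C} (f g : Hom C (init cp) W) : f = g.
Proof. rewrite (init_uniq f), (init_uniq g). reflexivity. Qed.

Lemma cpmap_inl {A B A' B' : C} (f : Hom C A A') (g : Hom C B B') :
  comp (cpmap cp f g) (inl cp A B) = comp (inl cp A' B') f.
Proof. unfold cpmap. apply copair_inl. Qed.

Lemma cpmap_inr {A B A' B' : C} (f : Hom C A A') (g : Hom C B B') :
  comp (cpmap cp f g) (inr cp A B) = comp (inr cp A' B') g.
Proof. unfold cpmap. apply copair_inr. Qed.

Lemma cpmap_comp {A B A' B' A'' B'' : C} (f : Hom C A A') (g : Hom C B B')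
  (f' : Hom C A' A'') (g' : Hom C B' B'') :
  comp (cpmap cp f' g') (cpmap cp f g) = cpmap cp (comp f' f) (comp g' g).
Proof.
  apply hom_ext.
  - rewrite <- comp_assoc, !cpmap_inl, comp_assoc, cpmap_inl, comp_assoc. reflexivity.
  - rewrite <- comp_assoc, !cpmap_inr, comp_assoc, cpmap_inr, comp_assoc. reflexivity.
Qed.

Lemma cpmap_id {A B : C} : cpmap cp (idm A) (idm B) = idm (coprod cp A B).
Proof.
  apply hom_ext.
  - rewrite cpmap_inl, comp_id_l, comp_id_r. reflexivity.
  - rewrite cpmap_inr, comp_id_l, comp_id_r. reflexivity.
Qed.

Lemma inl_Z0_split {Z : C} : comp (copair cp (idm Z) (init_map cp Z)) (inl cp Z (init cp)) = idm Z.
Proof. apply copair_inl. Qed.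
Lemma inr_0Z_split {Z : C} : comp (copair cp (init_map cp Z) (idm Z)) (inr cp (init cp) Z) = idm Z.
Proof. apply copair_inr. Qed.

Lemma cancel_left {A B W : C} (r : Hom C B A) (m : Hom C A B) (f g : Hom C W A) :
  comp r m = idm A -> comp m f = comp m g -> f = g.
Proof.
  intros Hr H. rewrite <- (comp_id_l f), <- (comp_id_l g), <- Hr, <- !comp_assoc, H.
  reflexivity.
Qed.

Hypothesis ext : Extensive cp.

Lemma ext_full (A B X Y X' Y' : C) (a : Hom C X A) (b : Hom C Y B)
          (a' : Hom C X' A) (b' : Hom C Y' B) (u : Hom C (coprod cp X Y) (coprod cp X' Y')) :
     comp (cpmap cp a' b') u = cpmap cp a b ->
     exists (p : Hom C X X') (q : Hom C Y Y'),
       comp a' p = a /\ comp b' q = b /\ u = cpmap cp p q.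
Proof. destruct ext as [_ [H _]]. apply H. Qed.

Lemma strict {Z : C} (p : Hom C Z (init cp)) {W : C} (f g : Hom C Z W) : f = g.
Proof.
  destruct (ext_full (init cp) (init cp) Z Z Z (init cp) p p p (idm _)
     (copair cp (inl cp Z (init cp)) (inl cp Z (init cp)))) as [p1 [q [_ [_ Hu]]]].
  { apply hom_ext.
    - rewrite <- comp_assoc, copair_inl, !cpmap_inl. reflexivity.
    - rewrite <- comp_assoc, copair_inr, cpmap_inl, cpmap_inr.
      rewrite (init_ext (inl cp (init cp) (init cp)) (inr cp (init cp) (init cp))). reflexivity. }
  assert (Hq : comp (inr cp Z (init cp)) q = inl cp Z (init cp)).
  { rewrite <- cpmap_inr with (f := p1), <- Hu. apply copair_inr. }
  assert (Hid : idm Z = comp (init_map cp Z) q).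
  { rewrite <- inl_Z0_split, <- Hq, comp_assoc, copair_inr. reflexivity. }
  rewrite <- (comp_id_r f), <- (comp_id_r g), Hid, !comp_assoc.
  rewrite (init_ext (comp f (init_map cp Z)) (comp g (init_map cp Z))). reflexivity.
Qed.

Lemma disjoint {Z A B : C} (x : Hom C Z A) (y : Hom C Z B) :
  comp (inl cp A B) x = comp (inr cp A B) y -> exists p : Hom C Z (init cp), True.
Proof.
  intro H.
  destruct (ext_full A B Z (init cp) (init cp) Z x (init_map cp B) (init_map cp A) y
     (copair cp (inr cp (init cp) Z) (init_map cp _))) as [p [_ [_ [_ _]]]].
  { apply hom_ext.
    - rewrite <- comp_assoc, copair_inl, cpmap_inr, cpmap_inl. symmetry; exact H.
    - apply init_ext. }
  exists p; exact I.
Qed.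

Lemma inl_mono {Z A B : C} (f g : Hom C Z A) :
  comp (inl cp A B) f = comp (inl cp A B) g -> f = g.
Proof.
  intro H.
  destruct (ext_full A B Z (init cp) Z (init cp) f (init_map cp B) g (init_map cp B)
     (idm _)) as [p [q [Hp [_ Hu]]]].
  { rewrite comp_id_r. apply hom_ext.
    - rewrite !cpmap_inl. symmetry; exact H.
    - apply init_ext. }
  assert (E: comp (inl cp Z (init cp)) p = comp (inl cp Z (init cp)) (idm Z)).
  { rewrite <- cpmap_inl with (g := q), <- Hu, comp_id_l, comp_id_r. reflexivity. }
  apply (cancel_left _ _ _ _ inl_Z0_split) in E. subst p. rewrite comp_id_r in Hp. auto.
Qed.

Lemma inr_mono {Z A B : C} (f g : Hom C Z B) :
  comp (inr cp A B) f = comp (inr cp A B) g -> f = g.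
Proof.
  intro H.
  destruct (ext_full A B (init cp) Z (init cp) Z (init_map cp A) f (init_map cp A) g
     (idm _)) as [p [q [_ [Hq Hu]]]].
  { rewrite comp_id_r. apply hom_ext.
    - apply init_ext.
    - rewrite !cpmap_inr. symmetry; exact H. }
  assert (E: comp (inr cp (init cp) Z) q = comp (inr cp (init cp) Z) (idm Z)).
  { rewrite <- cpmap_inr with (f := p), <- Hu, comp_id_l, comp_id_r. reflexivity. }
  apply (cancel_left _ _ _ _ inr_0Z_split) in E. subst q. rewrite comp_id_r in Hq. auto.
Qed.


Ltac ra := repeat rewrite <- comp_assoc.

Lemma lands_inl {Z A B A' B' : C} (u : Hom C Z (coprod cp A B)) (f : Hom C A A')
  (g : Hom C B B') (w : Hom C Z A') :
  comp (cpmap cp f g) u = comp (inl cp A' B') w ->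
  exists v : Hom C Z A, u = comp (inl cp A B) v.
Proof.
  intro H. destruct ext as [ES _].
  destruct (ES A B Z u) as [X [Y [a [b [phi [[psi [Hpp Hpp']] Hu]]]]]].
  assert (Hy : comp (inl cp A' B') (comp w (comp phi (inr cp X Y)))
             = comp (inr cp A' B') (comp g b)).
  { rewrite comp_assoc, <- H. ra. rewrite (comp_assoc (inr cp X Y) phi u), Hu, cpmap_inr.
    rewrite comp_assoc, cpmap_inr. ra. reflexivity. }
  destruct (disjoint _ _ Hy) as [p _].
  exists (comp (copair cp a (comp (init_map cp A) p)) psi).
  assert (E : comp u phi = comp (inl cp A B) (copair cp a (comp (init_map cp A) p))).
  { rewrite Hu. apply hom_ext.
    - rewrite cpmap_inl. ra. rewrite copair_inl. reflexivity.
    - apply (strict p). }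
  rewrite <- (comp_id_r u), <- Hpp', comp_assoc, E. ra. reflexivity.
Qed.

Lemma lands_inr {Z A B A' B' : C} (u : Hom C Z (coprod cp A B)) (f : Hom C A A')
  (g : Hom C B B') (w : Hom C Z B') :
  comp (cpmap cp f g) u = comp (inr cp A' B') w ->
  exists v : Hom C Z B, u = comp (inr cp A B) v.
Proof.
  intro H. destruct ext as [ES _].
  destruct (ES A B Z u) as [X [Y [a [b [phi [[psi [Hpp Hpp']] Hu]]]]]].
  assert (Hy : comp (inl cp A' B') (comp f a)
             = comp (inr cp A' B') (comp w (comp phi (inl cp X Y)))).
  { rewrite (comp_assoc _ w), <- H. ra. rewrite (comp_assoc (inl cp X Y) phi u), Hu, cpmap_inl.
    rewrite (comp_assoc a (inl cp A B) (cpmap cp f g)), cpmap_inl. ra. reflexivity. }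
  destruct (disjoint _ _ Hy) as [p _].
  exists (comp (copair cp (comp (init_map cp B) p) b) psi).
  assert (E : comp u phi = comp (inr cp A B) (copair cp (comp (init_map cp B) p) b)).
  { rewrite Hu. apply hom_ext.
    - apply (strict p).
    - rewrite cpmap_inr. ra. rewrite copair_inr. reflexivity. }
  rewrite <- (comp_id_r u), <- Hpp', comp_assoc, E. ra. reflexivity.
Qed.

Lemma square_pb {X C0 I : C} (a : Hom C X C0) :
  is_pullback (cpmap cp a (idm I)) (inl cp C0 I) (inl cp X I) a.
Proof.
  split.
  - apply cpmap_inl.
  - intros Z z1 z2 H.
    destruct (lands_inl z1 a (idm I) z2 H) as [v Hv].
    exists v. split; [split|].
    + symmetry; exact Hv.
    + apply (@inl_mono _ _ I). rewrite <- H, Hv, !comp_assoc, cpmap_inl. reflexivity.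
    + intros u' H1 _. apply (@inl_mono _ _ I). rewrite H1. exact Hv.
Qed.
End L.

Lemma TFTmap_comp {C : Category} (cp : Coproducts C) (T : Monad C) (F : Functor C C)
  {X Y Z : C} (f : Hom C X Y) (g : Hom C Y Z) :
  TFTmap cp T F (comp g f) = comp (TFTmap cp T F g) (TFTmap cp T F f).
Proof. unfold TFTmap, TFT. rewrite cpmap_comp, !fmap_comp. reflexivity. Qed.

Lemma TFTmap_id {C : Category} (cp : Coproducts C) (T : Monad C) (F : Functor C C)
  {X : C} : TFTmap cp T F (idm X) = idm _.
Proof. unfold TFTmap, TFT. rewrite !fmap_id. apply cpmap_id. Qed.

Ltac ra := repeat rewrite <- comp_assoc.
Ltac ra_in H := repeat rewrite <- comp_assoc in H.

Theorem lemma6p11 (C : Category) (cp : Coproducts C) (ext : Extensive cp)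
  (T : Monad C) (Tcons : consistent T) (F : Functor C C) (Fb : KleisliExtension T F)
  (I : C) (HT : preserves_finite_intersections T) (HF : preserves_finite_intersections F)
  (D : C) (d : Hom C D (TFT cp T F D)) (iD : Hom C I D)
  (C0 : C) (c : Hom C C0 (T (F C0))) (iC : Hom C I (T C0))
  (h : Hom C D (G_obj cp I C0))
  (hhom : coalg_hom cp T F I d iD (G_str cp T F I c iC) (G_pt cp I C0) h)
  (hmono : mono h) :
  exists (E : C) (e : Hom C E (T (F E))) (iE : Hom C I (T E)) (g : Hom C E C0),
    pure_coalg_hom T Fb I e iE c iC g /\
    exists phi : Hom C D (G_obj cp I E),
      coalg_iso cp T F I d iD (G_str cp T F I e iE) (G_pt cp I E) phi /\
      h = comp (G_map cp I g) phi.
Proof.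
  destruct hhom as [Hd Hi]. unfold G_obj, G_pt in *.
  pose proof ext as ext'. destruct ext' as [ES _].
  destruct (ES C0 I D h) as [X [Y [a [b [phi [[psi [Hpsi Hphi]] Hh]]]]]].
  assert (Hh' : h = comp (cpmap cp a b) psi).
  { rewrite <- Hh, <- comp_assoc, Hphi, comp_id_r; reflexivity. }
  assert (bmono : forall Z (f g : Hom C Z Y), comp b f = comp b g -> f = g).
  { intros Z f g H. apply (inr_mono _ _ ext (A:=X)).
    apply (cancel_left _ psi phi _ _ Hpsi). apply hmono.
    assert (E : comp (comp h phi) (comp (inr cp X Y) f) = comp (comp h phi) (comp (inr cp X Y) g)).
    { rewrite Hh, !comp_assoc, !cpmap_inr. ra. rewrite H. reflexivity. }
    ra. ra_in E. exact E. }
  destruct (ext_full _ _ ext C0 I (init cp) I X Y (init_map cp C0) (idm I) a b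
     (comp psi (comp iD (copair cp (init_map cp I) (idm I))))) as [p0 [q [_ [Hq _]]]].
  { rewrite comp_assoc, <- Hh', comp_assoc, Hi. apply hom_ext.
    - apply init_ext.
    - rewrite <- comp_assoc, copair_inr, cpmap_inr, !comp_id_r. reflexivity. }
  assert (Hqb : comp q b = idm Y).
  { apply bmono. rewrite comp_assoc, Hq, comp_id_l, comp_id_r. reflexivity. }
  set (Phi := comp (cpmap cp (idm X) b) psi).
  set (Psi := comp phi (cpmap cp (idm X) q)).
  assert (HPP1 : comp Psi Phi = idm D).
  { unfold Psi, Phi. ra. rewrite (comp_assoc psi), cpmap_comp, Hqb, comp_id_l, cpmap_id, comp_id_l.
    exact Hphi. }
  assert (HPP2 : comp Phi Psi = idm _).
  { unfold Psi, Phi. ra. rewrite (comp_assoc (cpmap cp (idm X) q) phi psi), Hpsi, comp_id_l.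
    rewrite cpmap_comp, Hq, comp_id_l, cpmap_id. reflexivity. }
  set (k := cpmap cp a (idm I)).
  assert (Hk : h = comp k Phi).
  { unfold k, Phi. rewrite comp_assoc, cpmap_comp, comp_id_r, comp_id_l. exact Hh'. }
  assert (kmono : mono k).
  { intros Z f g H. rewrite <- (comp_id_l f), <- (comp_id_l g), <- HPP2. ra. f_equal.
    apply hmono. rewrite Hk. ra. rewrite !(comp_assoc _ Psi Phi), HPP2, !comp_id_l. exact H. }
  assert (HiE0 : comp Phi iD = inr cp X I).
  { apply kmono. rewrite comp_assoc, <- Hk, Hi. unfold k. rewrite cpmap_inr, comp_id_r. reflexivity. }
  set (d2 := comp (TFTmap cp T F Phi) (comp d Psi)).
  assert (Hd2 : comp (TFTmap cp T F k) d2 = comp (G_str cp T F I c iC) k).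
  { unfold d2. rewrite comp_assoc, <- TFTmap_comp, <- Hk, comp_assoc, Hd, Hk. ra.
    rewrite HPP2, comp_id_r. reflexivity. }
  assert (inlmono : forall A B : C, mono (inl cp A B)).
  { intros A B Z f g. apply (inl_mono _ _ ext). }
  assert (H1 : comp (TFTmap cp T F k) (comp d2 (inl cp X I))
             = comp (inl cp (T (F (coprod cp C0 I))) (T (coprod cp C0 I))) (comp (fmap T (fmap F (inl cp C0 I))) (comp c a))).
  { rewrite comp_assoc, Hd2. unfold k, G_str, G_obj, TFT. ra. rewrite cpmap_inl.
    rewrite (comp_assoc a (inl cp C0 I) (cpmap cp c iC)), cpmap_inl. ra.
    rewrite comp_assoc, cpmap_inl. ra. reflexivity. }
  unfold TFTmap, TFT in H1.
  destruct (lands_inl _ _ ext _ _ _ _ H1) as [v1 Hv1].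
  assert (Hv1' : comp (fmap T (fmap F k)) v1 = comp (fmap T (fmap F (inl cp C0 I))) (comp c a)).
  { apply (inlmono _ (T (coprod cp C0 I))). rewrite <- H1, Hv1.
    rewrite (comp_assoc v1 (inl cp _ _) (cpmap cp _ _)), cpmap_inl. ra. reflexivity. }
  destruct HT as [HT1 HT2]. destruct HF as [HF1 HF2].
  pose proof (HT2 _ _ _ _ _ _ _ _ (HF1 _ _ _ kmono) (HF1 _ _ _ (inlmono C0 I))
     (HF2 _ _ _ _ _ _ _ _ kmono (inlmono C0 I) (square_pb _ _ ext a))) as PB1.
  destruct (proj2 PB1 X v1 (comp c a) Hv1') as [e [[He1 He2] _]].
  assert (H2 : comp (TFTmap cp T F k) (comp d2 (inr cp X I))
             = comp (inr cp (T (F (coprod cp C0 I))) (T (coprod cp C0 I))) (comp (fmap T (inl cp C0 I)) iC)).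
  { rewrite comp_assoc, Hd2. unfold k, G_str, G_obj, TFT. ra. rewrite cpmap_inr, comp_id_r.
    rewrite cpmap_inr, comp_assoc, cpmap_inr. ra. reflexivity. }
  unfold TFTmap, TFT in H2.
  destruct (lands_inr _ _ ext _ _ _ _ H2) as [v2 Hv2].
  assert (Hv2' : comp (fmap T k) v2 = comp (fmap T (inl cp C0 I)) iC).
  { apply (inr_mono _ _ ext (A := T (F (coprod cp C0 I)))). rewrite <- H2, Hv2.
    rewrite (comp_assoc v2 (inr cp _ _) (cpmap cp _ _)), cpmap_inr. ra. reflexivity. }
  pose proof (HT2 _ _ _ _ _ _ _ _ kmono (inlmono C0 I) (square_pb _ _ ext a)) as PB2.
  destruct (proj2 PB2 I v2 iC Hv2') as [iE [[Hi1 Hi2] _]].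
  assert (Hd2G : d2 = G_str cp T F I e iE).
  { unfold G_str, G_obj, TFT. apply hom_ext.
    - rewrite Hv1. ra. rewrite cpmap_inl. rewrite comp_assoc, cpmap_inl. ra.
      rewrite <- He1. reflexivity.
    - rewrite Hv2. ra. rewrite cpmap_inr. rewrite comp_assoc, cpmap_inr. ra.
      rewrite <- Hi1. reflexivity. }
  exists X, e, iE, a. split.
  - unfold pure_coalg_hom, kcomp. rewrite Fbar_pure. unfold pure. split.
    + rewrite fmap_comp. ra. rewrite (comp_assoc _ (fmap T (eta T (F C0))) (mu T (F C0))).
      rewrite mu_eta_r, comp_id_l.
      rewrite (comp_assoc a (eta T C0) (fmap T c)), eta_nat. ra. rewrite (comp_assoc _ (eta T _)), mu_eta_l, comp_id_l.
      exact He2.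
    + rewrite fmap_comp. ra. rewrite (comp_assoc _ (fmap T (eta T C0)) (mu T C0)).
      rewrite mu_eta_r, comp_id_l. exact Hi2.
  - exists Phi. split.
    + split.
      * split.
        -- rewrite <- Hd2G. unfold d2. ra. rewrite HPP1, comp_id_r. reflexivity.
        -- exact HiE0.
      * exists Psi. split; [split|split].
        -- rewrite <- Hd2G. unfold d2. rewrite comp_assoc, <- TFTmap_comp, HPP1, TFTmap_id, comp_id_l.
           reflexivity.
        -- unfold G_pt. rewrite <- HiE0, comp_assoc, HPP1, comp_id_l. reflexivity.
        -- exact HPP1.
        -- exact HPP2.
    + unfold G_map. exact Hk.
Qed.
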